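(* Let $q$ be a prime power, $m\ge2$, $1\le k<n$, and let $X\in\mathbb{F}_{q^m}^{k \times (n-k)}$ be chosen uniformly at random. Then $$\Pr\big(\mathrm{rs}[\,I_k\mid X\,] \text{ is a generalized Gabidulin code}\big)\leq \sum_{\substack{0<s<m\\ \gcd(s,m)=1}}\Pr\big(X\in\mathcal G(s)\big) =\sum_{\substack{0<s<m\\ \gcd(s,m)=1}}\frac{|\mathcal G(s)|}{q^{mk(n-k)}} .$$
   Context: For $0<s<m$ with $\gcd(s,m)=1$, $\mathcal G(s):=\{X \in (\mathbb{F}_{q^m}\setminus \mathbb{F}_q)^{k\times (n-k)} \mid \mathrm{rk}(X^{(q^s)}-X)=1\}$, where $X^{(q^s)}$ is obtained by raising each entry of $X$ to the $q^s$-th power. $\mathrm{rs}$ denotes $\mathbb{F}_{q^m}$-row space. For $s$ coprime to $m$ and $g_1,\dots,g_n\in\mathbb{F}_{q^m}$ linearly independent over $\mathbb{F}_q$, the generalized Gabidulin code of dimension $k$ with parameter $s$ is the row space of the $k\times n$ matrix with $(i,j)$ entry $g_j^{q^{s(i-1)}}$; a generalized Gabidulin code is such a code for some such $s$ and $g_1,\dots,g_n$. *)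

(* Defs.v *)
From HB Require Import structures.
From mathcomp Require Import all_boot all_order all_algebra all_field.
From mathcomp Require Import boolp.
Set Implicit Arguments. Unset Strict Implicit. Unset Printing Implicit Defensive.
Import GRing.Theory.
Local Open Scope ring_scope.

Section Defs.
Variables (L : finFieldType) (q m : nat).
(* L plays the role of F_{q^m} (hypothesis #|L| = q^m in the theorem);
   F_q is its unique subfield of order q, i.e. {x | x^q = x}. *)

Definition inFq (x : L) : bool := x ^+ q == x.

Definition frobmx (s : nat) {r c : nat} (X : 'M[L]_(r, c)) : 'M[L]_(r, c) :=
  map_mx (fun x => x ^+ (q ^ s)) X.

Definition Gset (s k c : nat) : {set 'M[L]_(k, c)} :=
  [set X : 'M[L]_(k, c) | [forall i, forall j, ~~ inFq (X i j)]
                         && (\rank (frobmx s X - X) == 1%N)].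

Definition Fq_linindep (N : nat) (g : 'I_N -> L) : Prop :=
  forall c : 'I_N -> L, (forall j, inFq (c j)) ->
    \sum_(j < N) c j * g j = 0 -> forall j, c j = 0.

Definition gabmx (s k N : nat) (g : 'I_N -> L) : 'M[L]_(k, N) :=
  \matrix_(i < k, j < N) g j ^+ (q ^ (s * i)).

Definition is_gen_gabidulin (k N : nat) (C : 'M[L]_(k, N)) : Prop :=
  exists (s : nat) (g : 'I_N -> L),
    coprime s m /\ Fq_linindep g /\ (C == gabmx s k g)%MS.

Definition Pr {k c : nat} (A : {set 'M[L]_(k, c)}) : rat :=
  (#|A|%:R / #|{: 'M[L]_(k, c)}|%:R)%R.

End Defs.

(* Main.v *)
Require Import Defs.
From HB Require Import structures.
From mathcomp Require Import all_boot all_order all_algebra all_field.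
From mathcomp Require Import boolp.
From mathcomp Require Import zify ring.
Import GRing.Theory.
Local Open Scope ring_scope.
Set Implicit Arguments. Unset Strict Implicit. Unset Printing Implicit Defensive.

Section Frob.
Variables (L : finFieldType) (q m p e : nat).
Hypotheses (pp : prime p) (qE : q = (p ^ e)%N) (cardL : #|L| = (q ^ m)%N)
  (m0 : (0 < m)%N).

Lemma charL : p \in [pchar L].
Proof. by apply: (card_finPcharP (n := (e * m)%N)) => //; rewrite cardL qE expnM. Qed.

Lemma q_gt0 : (0 < q)%N.
Proof. by rewrite qE expn_gt0 prime_gt0. Qed.

Definition fr s (x : L) := x ^+ (q ^ s).

Lemma frD s x y : fr s (x + y) = fr s x + fr s y.
Proof.
rewrite /fr qE -expnM; apply: exprDn_pchar.
by rewrite pnatX (pnatE _ pp) charL.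
Qed.

Lemma frM s x y : fr s (x * y) = fr s x * fr s y.
Proof. by rewrite /fr exprMn. Qed.

Lemma fr0 s : fr s 0 = 0.
Proof. by rewrite /fr expr0n expn_eq0 eqn0Ngt q_gt0. Qed.

Lemma fr1 s : fr s 1 = 1.
Proof. by rewrite /fr expr1n. Qed.

Lemma frN s x : fr s (- x) = - fr s x.
Proof. by apply/eqP; rewrite -subr_eq0 opprK -frD addNr fr0. Qed.

Lemma frB s x y : fr s (x - y) = fr s x - fr s y.
Proof. by rewrite frD frN. Qed.

Lemma fr_sum s I (r : seq I) (P : pred I) (F : I -> L) :
  fr s (\sum_(i <- r | P i) F i) = \sum_(i <- r | P i) fr s (F i).
Proof. exact: (big_morph _ (frD s) (fr0 s)). Qed.

Lemma fr_eq0 s x : fr s x = 0 -> x = 0.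
Proof. by move/eqP; rewrite /fr expf_eq0 => /andP[_ /eqP]. Qed.

Lemma frfr a b x : fr a (fr b x) = fr (a + b) x.
Proof. by rewrite /fr -exprM -expnD addnC. Qed.

Lemma fr_0 x : fr 0 x = x.
Proof. by rewrite /fr expn0 expr1. Qed.

Lemma frm x : fr m x = x.
Proof. by rewrite /fr -cardL expf_card. Qed.

Lemma fr_iter s t x : fr s x = x -> fr (s * t) x = x.
Proof.
move=> H; elim: t => [|t IH]; first by rewrite muln0 fr_0.
by rewrite mulnS -frfr IH H.
Qed.

Lemma fr_mod s x : fr s x = fr (s %% m) x.
Proof.
rewrite {1}(divn_eq s m) -frfr.
by rewrite [(_ %/ _ * _)%N]mulnC (fr_iter _ (frm _)).
Qed.

Lemma fixedP s x : coprime s m -> (fr s x = x) <-> inFq q x.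
Proof.
move=> cop; split; last first.
  move/eqP => H; have H1 : fr 1 x = x by rewrite /fr expn1.
  by rewrite -(mul1n s) (fr_iter _ H1).
move=> H; apply/eqP.
have [a _ /dvdnP[b Hb]] := Bezoutr s m0.
move: cop; rewrite /coprime => /eqP cop; rewrite cop in Hb.
have : fr (1 + a * s) x = x by rewrite Hb mulnC (fr_iter _ (frm x)).
by rewrite -frfr mulnC (fr_iter _ H) /fr expn1.
Qed.

Lemma fr_fix s i x : coprime s m -> inFq q x -> fr (s * i) x = x.
Proof. by move=> cop /(fixedP _ cop) H; apply: fr_iter. Qed.


Lemma linindep_fr s N (g : 'I_N -> L) : coprime s m -> Fq_linindep q g ->
  Fq_linindep q (fun j => fr s (g j)).
Proof.
move=> cop gi a aK sum j; apply (gi a aK); apply: (@fr_eq0 s).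
rewrite fr_sum -[RHS]sum; apply: eq_bigr => i _.
by rewrite frM (proj2 (fixedP (a i) cop) (aK i)).
Qed.

Lemma moore_col s (cop : coprime s m) r : forall N (g : 'I_N -> L),
  Fq_linindep q g -> forall c : 'I_N -> L,
  (#|[set j | c j != 0%R]| <= r)%N ->
  (forall i, (i < r)%N -> \sum_j c j * fr (s * i) (g j) = 0) ->
  forall j, c j = 0.
Proof.
elim: r => [|r IH] N g gi c supp rows.
  move=> j; apply/eqP; apply: contraT => cj.
  rewrite leqn0 in supp; move/eqP/card0_eq in supp.
  by have := supp j; rewrite inE cj.
case: (boolP [forall j, c j == 0]) => [/forallP H j|]; first by apply/eqP.
rewrite negb_forall => /existsP [j0 cj0].
pose c' j := c j / c j0.
have rows' : forall i, (i < r.+1)%N -> \sum_j c' j * fr (s * i) (g j) = 0.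
  move=> i /rows Hi; rewrite /c'.
  under eq_bigr do rewrite mulrAC.
  by rewrite -mulr_suml Hi mul0r.
pose d j := fr s (c' j) - c' j.
have gi' := linindep_fr cop gi.
have dsupp : (#|[set j | d j != 0%R]| <= r)%N.
  have sub : [set j | d j != 0] \subset [set j | c j != 0] :\ j0.
    apply/subsetP => j; rewrite !inE /d /c'; apply: contraR.
    rewrite negb_and !negbK => /orP[/eqP -> | /eqP ->].
      by rewrite divff // fr1 subrr.
    by rewrite mul0r fr0 subrr.
  apply: leq_trans (subset_leq_card sub) _.
  move: supp; rewrite (cardsD1 j0) inE cj0 /=; lia.
have drows : forall i, (i < r)%N -> \sum_j d j * fr (s * i) (fr s (g j)) = 0.
  move=> i ir.
  have e1 : forall j, fr (s * i) (fr s (g j)) = fr (s * i.+1) (g j).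
    by move=> j; rewrite frfr mulnS addnC.
  under eq_bigr do rewrite e1 /d mulrBl.
  rewrite sumrB rows' // subr0.
  have -> : \sum_j fr s (c' j) * fr (s * i.+1) (g j) =
            fr s (\sum_j c' j * fr (s * i) (g j)).
    by rewrite fr_sum; apply: eq_bigr => j _; rewrite frM frfr mulnS.
  by rewrite rows' ?fr0 // ltnW.
have dz := IH N _ gi' d dsupp drows.
have cK : forall j, inFq q (c' j).
  move=> j; apply/(fixedP _ cop); apply/eqP; rewrite -subr_eq0; apply/eqP.
  exact: dz.
have := gi c' cK; rewrite (_ : \sum_j c' j * g j = 0); last first.
  by rewrite -[RHS](rows' 0%N) //; apply: eq_bigr => j _; rewrite muln0 fr_0.
move=> /(_ erefl j0) /eqP; rewrite /c' divff //.
by rewrite oner_eq0.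
Qed.


Lemma gabmxE s r N (g : 'I_N -> L) i j : gabmx q s r g i j = fr (s * i) (g j).
Proof. by rewrite mxE. Qed.

Lemma moore_free s r N (g : 'I_N -> L) : coprime s m -> Fq_linindep q g ->
  (r <= N)%N -> row_free (gabmx q s r g).
Proof.
move=> cop gi Hr.
pose B : 'M[L]_r := \matrix_(i, l) fr (s * i) (g (widen_ord Hr l)).
have Hcol : forall w : 'cV[L]_r, B *m w = 0 -> w = 0.
  move=> w Bw.
  pose c (j : 'I_N) : L := if insub (val j) is Some l then w l 0 else 0.
  have cw : forall l, c (widen_ord Hr l) = w l 0.
    by move=> l; rewrite /c /= valK.
  have supp : (#|[set j | c j != 0%R]| <= r)%N.
    have Hsub : [set j | c j != 0%R] \subset (widen_ord Hr) @: [set: 'I_r].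
      apply/subsetP => j; rewrite inE /c.
      case: insubP => [l _ lj _ | _]; last by rewrite eqxx.
      by apply/imsetP; exists l => //; apply: val_inj.
    by apply: leq_trans (subset_leq_card Hsub) _; rewrite (leq_trans (leq_imset_card _ _)) // cardsT card_ord.
  have rows : forall i, (i < r)%N -> \sum_j c j * fr (s * i) (g j) = 0.
    move=> i ir.
    rewrite (bigID (fun j : 'I_N => (j < r)%N)) /=.
    rewrite [X in _ + X]big1 ?addr0; last first.
      by move=> j jr; rewrite /c insubF ?mul0r //; apply: negbTE.
    rewrite (big_ord_narrow Hr) /=.
    have := congr1 (fun M : 'M[L]_(r, 1) => M (Ordinal ir) ord0) Bw; rewrite !mxE => H.
    rewrite -[RHS]H; apply: eq_bigr => l _; rewrite cw mxE mulrC //.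
  have cz := moore_col cop gi supp rows.
  by apply/matrixP => l j; rewrite ord1 mxE -cw cz.
have BT : B^T \in unitmx.
  rewrite -row_free_unit -kermx_eq0; apply/eqP/row_matrixP => i; rewrite row0.
  have H1 : row i (kermx B^T) *m B^T = 0 by rewrite -row_mul mulmx_ker row0.
  have H2 : B *m (row i (kermx B^T))^T = 0.
    by have := congr1 trmx H1; rewrite trmx_mul trmxK trmx0.
  by rewrite -[row _ _]trmxK (Hcol _ H2) trmx0.
have Bu : B \in unitmx by rewrite -unitmx_tr.
rewrite -kermx_eq0; apply/eqP/row_matrixP => i; rewrite row0.
set v := row i _.
have H1 : v *m gabmx q s r g = 0 by rewrite -row_mul mulmx_ker row0.
have H2 : v *m B = 0.
  apply/matrixP => a l; rewrite !mxE.
  have := congr1 (fun M : 'M[L]_(1, N) => M a (widen_ord Hr l)) H1; rewrite !mxE => H.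
  rewrite -[RHS]H.
  by apply: eq_bigr => j _; rewrite !mxE.
by rewrite -[v](mulmxK Bu) H2 mul0mx.
Qed.


Lemma splitL k c (t : 'I_k) : split (lshift c t) = inl t.
Proof. exact: (unsplitK (inl _)). Qed.
Lemma splitR k c (t : 'I_c) : split (rshift k t) = inr t.
Proof. exact: (unsplitK (inr _)). Qed.

Lemma map_frM s a b c (A : 'M[L]_(a, b)) (B : 'M[L]_(b, c)) :
  map_mx (fr s) (A *m B) = map_mx (fr s) A *m map_mx (fr s) B.
Proof.
apply/matrixP => i j; rewrite !mxE fr_sum; apply: eq_bigr => l _.
by rewrite !mxE frM.
Qed.

Lemma map_fr_sub s a b c (A : 'M[L]_(a, c)) (B : 'M[L]_(b, c)) :
  (A <= B)%MS -> (map_mx (fr s) A <= map_mx (fr s) B)%MS.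
Proof. by case/submxP => D ->; rewrite map_frM submxMl. Qed.

Lemma map_fr1 s k : map_mx (fr s) (1%:M : 'M[L]_k) = 1%:M.
Proof.
by apply/matrixP => i j; rewrite !mxE; case: (i == j); rewrite /= ?fr1 ?fr0.
Qed.

Lemma rank_row1 k c (Y : 'M[L]_(k, c)) : \rank (row_mx 1%:M Y) = k.
Proof.
apply/eqP; rewrite eqn_leq rank_leq_row /=.
apply: leq_trans (mxrankM_maxl (row_mx 1%:M Y) (col_mx 1%:M (0 : 'M_(c, k)))).
by rewrite mul_row_col mulmx0 addr0 mulmx1 mxrank1.
Qed.

Lemma inFqP x : inFq q x <-> fr 1 x = x.
Proof. by split => [/(fixedP _ (coprime1n m))|/(fixedP _ (coprime1n m))]. Qed.

Lemma gab_rank s k c (X : 'M[L]_(k, c)) (g : 'I_(k + c) -> L) :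
  (0 < k)%N -> (0 < c)%N -> coprime s m -> Fq_linindep q g ->
  (row_mx 1%:M X == gabmx q s k g)%MS ->
  \rank (map_mx (fr s) X - X) = 1%N.
Proof.
move=> k0 c0 cop gi HCG.
set C := row_mx 1%:M X; set G := gabmx q s k g.
set G' := gabmx q s k.+1 g.
set Cs := map_mx (fr s) C; set Gs := map_mx (fr s) G.
have CsE : Cs = row_mx 1%:M (map_mx (fr s) X) by rewrite /Cs map_row_mx map_fr1.
have rG' : \rank G' = k.+1.
  by apply/eqP; apply: moore_free => //; lia.
have sGG' : (G <= G')%MS.
  apply/row_subP => i.
  suff -> : row i G = row (widen_ord (leqnSn k) i) G' by apply: row_sub.
  by apply/rowP => j; rewrite !mxE.
have sGsG' : (Gs <= G')%MS.
  apply/row_subP => i.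
  suff -> : row i Gs = row (lift ord0 i) G' by apply: row_sub.
  by apply/rowP => j; rewrite !mxE frfr lift0 mulnS.
have sG'G : (G' <= G + Gs)%MS.
  apply/row_subP => i; case: (unliftP ord0 i) => [j ->|->].
    apply: submx_trans (addsmxSr G Gs).
    suff -> : row (lift ord0 j) G' = row j Gs by apply: row_sub.
    by apply/rowP => l; rewrite !mxE frfr lift0 mulnS.
  apply: submx_trans (addsmxSl G Gs).
  suff -> : row ord0 G' = row (Ordinal k0) G by apply: row_sub.
  by apply/rowP => l; rewrite !mxE.
have rGGs : \rank (G + Gs) = k.+1.
  rewrite -rG'; apply: eqmx_rank; apply/andP; split => //.
  by rewrite addsmx_sub sGG'.
have [HCG1 HCG2] := andP HCG.
have HCs : (Cs == Gs)%MS by rewrite /Cs /Gs !map_fr_sub.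
have rCCs : \rank (C + Cs) = k.+1.
  rewrite -rGGs; apply: eqmx_rank; apply/eqmxP.
  by apply: adds_eqmx; apply/eqmxP.
have rC : \rank C = k by rewrite rank_row1.
have rCs : \rank Cs = k by rewrite CsE rank_row1.
have rcap : \rank (C :&: Cs)%MS = k.-1.
  by have := mxrank_sum_cap C Cs; rewrite rCCs rC rCs; lia.
set P := (C :&: Cs)%MS.
set A := P *m pinvmx C; set B := P *m pinvmx Cs.
have HA : A *m C = P by rewrite mulmxKpV // capmxSl.
have HB : B *m Cs = P by rewrite mulmxKpV // capmxSr.
have := HA; rewrite -HB CsE /C !mul_mx_row !mulmx1 => /eq_row_mx [AB AXB].
have AY : A *m (map_mx (fr s) X - X) = 0 by rewrite mulmxBr AXB AB subrr.
have r1 : (\rank P <= \rank A)%N by rewrite -HA mxrankM_maxl.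
have r2 : (\rank A <= k - \rank (map_mx (fr s) X - X)%R)%N.
  by rewrite -mxrank_ker; apply: mxrankS; apply/sub_kermxP.
have r3 : (\rank (map_mx (fr s) X - X)%R <= k)%N by apply: rank_leq_row.
have r4 : \rank (map_mx (fr s) X - X) != 0%N.
  rewrite mxrank_eq0 subr_eq0; apply/negP => /eqP HX.
  have : (\rank (C + Cs) <= \rank C)%N.
    apply: mxrankS; rewrite addsmx_sub submx_refl CsE HX /=; exact: submx_refl.
  by rewrite rCCs rC ltnn.
rewrite rcap in r1; lia.
Qed.


Lemma gab_entries s k c (X : 'M[L]_(k, c)) (g : 'I_(k + c) -> L) :
  coprime s m -> Fq_linindep q g ->
  (row_mx 1%:M X == gabmx q s k g)%MS ->
  forall i j, ~~ inFq q (X i j).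
Proof.
move=> cop gi HCG i j; apply/negP => cK.
set cc := X i j.
set C := row_mx 1%:M X; set G := gabmx q s k g.
have [HCG1 _] := andP HCG.
have uG : (row i C <= G)%MS := submx_trans (row_sub i C) HCG1.
have [a ua] := submxP uG.
have uE : forall x, C i x = \sum_l a 0 l * fr (s * l) (g x).
  move=> x; have := congr1 (fun M : 'M[L]_(1, k + c) => M 0 x) ua.
  by rewrite !mxE => ->; apply: eq_bigr => l _; rewrite mxE.
pose h (t : 'I_k) := if t == i then g (rshift k j) - cc * g (lshift c i)
                     else g (lshift c t).
have hi : Fq_linindep q h.
  move=> d dK Hd.
  pose ee (x : 'I_(k + c)) := match split x with
    | inl t => if t == i then - (d i * cc) else d t
    | inr j' => if j' == j then d i else 0 end.
  have eK : forall x, inFq q (ee x).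
    move=> x; apply/inFqP; rewrite /ee; case: (split x) => [t|j'].
      case: (t == i); last by apply/inFqP.
      by rewrite frN frM (proj1 (inFqP _) (dK i)) (proj1 (inFqP _) cK).
    by case: (j' == j); [apply/inFqP | rewrite fr0].
  have eS : \sum_x ee x * g x = 0.
    have S2 : \sum_(j' < c) ee (rshift k j') * g (rshift k j') = d i * g (rshift k j).
      rewrite (bigD1 j) //= /ee splitR eqxx big1 ?addr0 // => j' nj.
      by rewrite splitR (negbTE nj) mul0r.
    rewrite -[RHS]Hd big_split_ord /= S2 /ee.
    rewrite (bigD1 i) //= splitL eqxx [RHS](bigD1 i) //= /h eqxx.
    under eq_bigr => t ti do rewrite splitL (negbTE ti).
    under [in RHS]eq_bigr => t ti do rewrite (negbTE ti).
    ring.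
  have ez := gi ee eK eS.
  move=> t; case: (eqVneq t i) => [->|ti].
    by have := ez (rshift k j); rewrite /ee splitR eqxx.
  by have := ez (lshift c t); rewrite /ee splitL (negbTE ti).
have hfree := moore_free (r := k) cop hi (leqnn k).
have a0 : a *m gabmx q s k h = 0.
  apply/rowP => t; rewrite !mxE.
  case: (eqVneq t i) => [->|ti].
    have -> : \sum_l a 0 l * gabmx q s k h l i =
              C i (rshift k j) - cc * C i (lshift c i).
      rewrite !uE mulr_sumr -sumrB; apply: eq_bigr => l _.
      rewrite gabmxE /h eqxx frB frM (fr_fix _ cop cK) /cc; ring.
    by rewrite /C row_mxEr row_mxEl mxE eqxx mulr1 subrr.
  have -> : \sum_l a 0 l * gabmx q s k h l t = C i (lshift c t).
    by rewrite uE; apply: eq_bigr => l _; rewrite gabmxE /h (negbTE ti).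
  by rewrite /C row_mxEl mxE eq_sym (negbTE ti).
have az : a = 0.
  have K0 : kermx (gabmx q s k h) = 0 by apply/eqP; rewrite kermx_eq0.
  by apply/eqP; rewrite -submx0 -K0; apply/sub_kermxP.
have := uE (lshift c i); rewrite az /C row_mxEl mxE eqxx.
under eq_bigr do rewrite mxE mul0r.
by rewrite big1 // => /eqP; rewrite oner_eq0.
Qed.

End Frob.

Lemma card_bigcup_le (T : finType) (I : finType) (P : pred I) (F : I -> {set T}) :
  (#|\bigcup_(i | P i) F i| <= \sum_(i | P i) #|F i|)%N.
Proof.
elim/big_rec2: _ => [|i B n _ IH]; first by rewrite cards0.
by apply: leq_trans (leq_card_setU _ _).1 _; rewrite leq_add2l.
Qed.

Import Num.Theory.

Theorem lemma4p7 (L : finFieldType) (q m k n : nat) :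
  (exists p e : nat, [/\ prime p, (0 < e)%N & q = (p ^ e)%N]) ->
  #|L| = (q ^ m)%N ->
  (2 <= m)%N -> (1 <= k)%N -> (k < n)%N ->
  Pr [set X : 'M[L]_(k, n - k) |
        `[< is_gen_gabidulin q m (row_mx (1%:M : 'M[L]_k) X) >]]
    <= \sum_(s < m | (0 < s)%N && coprime s m) Pr (Gset L q s k (n - k))
  /\ \sum_(s < m | (0 < s)%N && coprime s m) Pr (Gset L q s k (n - k))
     = \sum_(s < m | (0 < s)%N && coprime s m)
         (#|Gset L q s k (n - k)|%:R / (q ^ (m * k * (n - k)))%N%:R : rat).
Proof.
move=> [p [e [pp e0 qE]]] cardL m2 k1 kn.
have m0 : (0 < m)%N by lia.
have cardT : #|{: 'M[L]_(k, n - k)}| = (q ^ (m * k * (n - k)))%N.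
  by rewrite card_mx cardL -expnM mulnA.
split; last by apply: eq_bigr => s _; rewrite /Pr cardT.
set A := [set X : 'M[L]_(k, n - k) | _].
have Hsub : A \subset \bigcup_(s < m | (0 < s)%N && coprime s m) Gset L q s k (n - k).
  apply/subsetP => X; rewrite inE => /asboolP [s [g [cop [gi HC]]]].
  apply/bigcupP; exists (Ordinal (ltn_pmod s m0)) => /=.
    rewrite coprime_modl cop andbT lt0n; apply/negP => sm.
    have H : gcdn s m = m by apply/gcdn_idPr.
    by move: cop; rewrite /coprime H => /eqP m1; lia.
  rewrite inE; apply/andP; split.
    apply/forallP => i; apply/forallP => j.
    exact: (gab_entries pp qE cardL m0 cop gi HC).
  have -> : frobmx q (s %% m) X = map_mx (fr q s) X.
    by apply/matrixP => i j; rewrite !mxE (fr_mod cardL).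
  by rewrite (gab_rank pp qE cardL m0 _ _ cop gi HC) //; lia.
have cA := leq_trans (subset_leq_card Hsub) (card_bigcup_le _ _).
rewrite /Pr -mulr_suml -natr_sum.
by apply: ler_wpM2r; [rewrite invr_ge0 ler0n | rewrite ler_nat].
Qed.
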